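(* Let $(Y,\preceq,\to)$ be an ordered vector space and $K=\{x\in Y: x\succeq0\}$ its positive cone. If $\prec$ is a strict vector ordering on $Y$, then $K$ is a solid cone with interior $K^\circ=\{x\in Y: x\succ 0\}$. Conversely, if $K$ is a solid cone with interior $K^\circ$, then the relation defined by $x\prec y$ iff $y-x\in K^\circ$ is the unique strict vector ordering on $Y$.
   Context: Vector space with convergence: a real vector space $Y$ with a relation $\to$ between sequences in $Y$ and points of $Y$ (uniqueness of limits not assumed) such that (C1) $x_n\to x$, $y_n\to y$ imply $x_n+y_n\to x+y$; (C2) $x_n\to x$, $\lambda\in\mathbb R$ imply $\lambda x_n\to\lambda x$; (C3) $\lambda_n\to\lambda$ in $\mathbb R$, $x\in Y$ imply $\lambda_n x\to\lambda x$. $A\subseteq Y$ is open if $x_n\to x\in A$ implies $x_n\in A$ for all but finitely many $n$; closed if $x_n\to x$, $x_n\in A$ for all $n$ imply $x\in A$. $A^\circ$ is the union of all open subsets of $A$. A cone is a nonempty closed $K$ with $\lambda K\subseteq K$ ($\lambda\ge 0$), $K+K\subseteq K$, $K\cap(-K)=\{0\}$; solid if $K\ne\{0\}$ and $K^\circ\neq\emptyset$. A vector ordering is a partial order $\preceq$ with (V1) $x\preceq y\Rightarrow x+z\preceq y+z$; (V2) $\lambda\ge0$, $x\preceq y\Rightarrow\lambda x\preceq\lambda y$; (V3) $x_n\to x$, $y_n\to y$, $x_n\preceq y_n$ $\forall n\Rightarrow x\preceq y$; $(Y,\preceq,\to)$ is then an ordered vector space. A strict ordering is a nonempty irreflexive,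 asymmetric, transitive relation. A strict vector ordering on an ordered vector space is a strict ordering $\prec$ such that (S1) $x\prec y\Rightarrow x\preceq y$; (S2) $x\preceq y$, $y\prec z\Rightarrow x\prec z$; (S3) $x\prec y\Rightarrow x+z\prec y+z$; (S4) $\lambda>0$, $x\prec y\Rightarrow\lambda x\prec\lambda y$; (S5) if $x_n\to x$, $y_n\to y$ and $x\prec y$, then $x_n\prec y_n$ for all but finitely many $n$. $x\succ y$ means $y\prec x$. *)

(* Defs.v *)
From HB Require Import structures.
From mathcomp Require Import all_boot all_order all_algebra.
From mathcomp Require Import all_classical all_reals all_analysis.
Set Implicit Arguments. Unset Strict Implicit. Unset Printing Implicit Defensive.
Import Order.TTheory GRing.Theory Num.Theory numFieldNormedType.Exports.
Local Open Scope classical_set_scope.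
Local Open Scope ring_scope.

Section VSConv.
Variables (R : realType) (Y : lmodType R).
Variable conv : (nat -> Y) -> Y -> Prop.

Definition is_convergence : Prop :=
  [/\ forall (x y : nat -> Y) (a b : Y),
        conv x a -> conv y b -> conv (fun n => x n + y n) (a + b),
      forall (x : nat -> Y) (a : Y) (l : R),
        conv x a -> conv (fun n => l *: x n) (l *: a) &
      forall (lam : nat -> R) (l : R) (a : Y),
        lam n @[n --> \oo] --> l -> conv (fun n => lam n *: a) (l *: a)].

Definition conv_open (A : set Y) : Prop :=
  forall (x : nat -> Y) (a : Y), conv x a -> A a ->
    exists N : nat, forall n, (N <= n)%N -> A (x n).

Definition conv_closed (A : set Y) : Prop :=
  forall (x : nat -> Y) (a : Y), conv x a -> (forall n, A (x n)) -> A a.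

Definition conv_interior (A : set Y) : set Y :=
  fun a => exists U : set Y, [/\ conv_open U, U `<=` A & U a].

Definition is_cone (K : set Y) : Prop :=
  [/\ K !=set0, conv_closed K,
      forall (l : R) (x : Y), 0 <= l -> K x -> K (l *: x),
      forall x y : Y, K x -> K y -> K (x + y) &
      K `&` [set x | K (- x)] = [set 0]].

Definition is_solid_cone (K : set Y) : Prop :=
  [/\ is_cone K, K <> [set 0] & conv_interior K !=set0].

Definition is_vector_ordering (le : Y -> Y -> Prop) : Prop :=
  (forall x, le x x)
      /\ (forall x y, le x y -> le y x -> x = y)
      /\ (forall x y z, le x y -> le y z -> le x z)
      /\ (forall x y z, le x y -> le (x + z) (y + z))
      /\ (forall (l : R) x y, 0 <= l -> le x y -> le (l *: x) (l *: y))
      /\ (forall (x y : nat -> Y) a b, conv x a -> conv y b ->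
                  (forall n, le (x n) (y n)) -> le a b).

Definition is_strict_ordering (lt : Y -> Y -> Prop) : Prop :=
  [/\ (exists x y, lt x y),
      (forall x, ~ lt x x),
      (forall x y, lt x y -> ~ lt y x) &
      (forall x y z, lt x y -> lt y z -> lt x z)].

Definition is_strict_vector_ordering (le lt : Y -> Y -> Prop) : Prop :=
  is_strict_ordering lt
      /\ (forall x y, lt x y -> le x y)
      /\ (forall x y z, le x y -> lt y z -> lt x z)
      /\ (forall x y z, lt x y -> lt (x + z) (y + z))
      /\ (forall (l : R) x y, 0 < l -> lt x y -> lt (l *: x) (l *: y))
      /\ (forall (x y : nat -> Y) a b, conv x a -> conv y b -> lt a b ->
                  exists N : nat, forall n, (N <= n)%N -> lt (x n) (y n)).

End VSConv.

(* Main.v *)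
Require Import Defs.
From HB Require Import structures.
From mathcomp Require Import all_boot all_order all_algebra.
From mathcomp Require Import all_classical all_reals all_analysis.
Import Order.TTheory GRing.Theory Num.Theory numFieldNormedType.Exports.
Local Open Scope classical_set_scope.
Local Open Scope ring_scope.
Set Implicit Arguments.

Section S.
Variables (R : realType) (Y : lmodType R) (conv : (nat -> Y) -> Y -> Prop).
Hypothesis Hc : is_convergence conv.

Lemma conv_eq f g a b : conv f a -> f = g -> a = b -> conv g b.
Proof. by move=> h <- <-. Qed.

Lemma conv_const a : conv (fun _ => a) a.
Proof.
case: Hc => _ _ C3.
have h : (fun _ : nat => (1:R)) @ \oo --> (1:R) by apply: cvg_cst.
move: (C3 _ _ a h).
move=> h2; by apply: (conv_eq h2); [apply/funext => n|]; rewrite scale1r.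
Qed.

Lemma conv_small x e : conv (fun n => x - n.+1%:R^-1 *: e) x.
Proof.
case: Hc => C1 C2 C3.
have h1 := C3 _ _ e (@cvg_harmonic R).
have h2 := C2 _ _ (-1) h1.
have := C1 _ _ _ _ (conv_const x) h2.
move=> h3; apply: (conv_eq h3).
  by apply/funext => n; rewrite scaleN1r.
by rewrite scale0r scaler0 addr0.
Qed.

Variable le : Y -> Y -> Prop.
Hypothesis Hv : is_vector_ordering conv le.

Lemma le_sub x y : le x y <-> le 0 (y - x).
Proof.
case: Hv => refl [antis [tr [V1 [V2 V3]]]].
split => h.
  by have := V1 _ _ (- x) h; rewrite subrr.
by have := V1 _ _ x h; rewrite add0r subrK.
Qed.

Lemma le_add x y : le 0 x -> le 0 y -> le 0 (x + y).
Proof.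
case: Hv => refl [antis [tr [V1 [V2 V3]]]] hx hy.
apply: tr hy _.
by have := V1 _ _ y hx; rewrite add0r.
Qed.

Lemma le_antis0 x : le 0 x -> le 0 (- x) -> x = 0.
Proof.
case: Hv => refl [antis [tr [V1 [V2 V3]]]] hx hnx.
have := V1 _ _ x hnx; rewrite add0r addNr => h.
by apply: antis.
Qed.

Section Part1.
Variable lt : Y -> Y -> Prop.
Hypothesis Hs : is_strict_vector_ordering conv le lt.

Lemma lt_sub x y : lt x y <-> lt 0 (y - x).
Proof.
case: Hs => _ [S1 [S2 [S3 [S4 S5]]]].
split => h.
  by have := S3 _ _ (- x) h; rewrite subrr.
by have := S3 _ _ x h; rewrite add0r subrK.
Qed.

Lemma ex_pos : exists e, lt 0 e.
Proof.
case: Hs => [[[a [b hab]] _ _ _] _].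
by exists (b - a); apply: (proj1 (lt_sub _ _)).
Qed.

Lemma interior_eq : conv_interior conv [set x | le 0 x] = [set x | lt 0 x].
Proof.
case: Hv => refl [antis [tr [V1 [V2 V3]]]].
case: Hs => _ [S1 [S2 [S3 [S4 S5]]]].
apply/seteqP; split => x /=.
  move=> [U [oU UK Ux]].
  have [e he] := ex_pos.
  have [N hN] := oU _ _ (conv_small x e) Ux.
  set t : R := N.+1%:R^-1.
  have hK : le 0 (x - t *: e) by apply: UK; apply: hN.
  have ht : 0 < t by rewrite /t invr_gt0.
  have hte : lt 0 (t *: e) by have := S4 _ _ _ ht he; rewrite scaler0.
  have := S3 _ _ (x - t *: e) hte.
  rewrite add0r subrKC => h.
  exact: S2 hK h.
move=> Hx.
exists [set y | lt 0 y]; split => //.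
- move=> xs a hc ha.
  exact: S5 _ _ _ _ (conv_const 0) hc ha.
- by move=> y /= /S1.
Qed.

Lemma part1 : is_solid_cone conv [set x | le 0 x] /\
   conv_interior conv [set x | le 0 x] = [set x | lt 0 x].
Proof.
case: Hv => refl [antis [tr [V1 [V2 V3]]]].
case: Hs => [[[a [b hab]] irr _ _] [S1 [S2 [S3 [S4 S5]]]]].
split; last exact: interior_eq.
split.
- split.
  + by exists 0.
  + move=> xs c hc hK; exact: V3 _ _ _ _ (conv_const 0) hc hK.
  + by move=> l x hl hx; have := V2 _ _ _ hl hx; rewrite scaler0.
  + by move=> x y; apply: le_add.
  + apply/seteqP; split => x /=.
      by move=> [hx hnx]; apply: le_antis0.
    by move=> ->; rewrite oppr0; split; apply: refl.
- move=> h.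
  have hba : lt 0 (b - a) by apply: (proj1 (lt_sub _ _)).
  have : [set x | le 0 x] (b - a) by apply: S1.
  rewrite h /= => e.
  by apply: (irr 0); rewrite -{2}e.
- exists (b - a); rewrite interior_eq /=; exact: (proj1 (lt_sub _ _)).
Qed.
End Part1.

Section Part2.
Hypothesis hne : [set x | le 0 x] <> [set 0].
Hypothesis hint : conv_interior conv [set x | le 0 x] !=set0.
Let I := conv_interior conv [set x | le 0 x].

Lemma I_K x : I x -> le 0 x.
Proof. by move=> [U [_ UK Ux]]; apply: UK. Qed.

Lemma I_add x k : I x -> le 0 k -> I (x + k).
Proof.
case: Hc => C1 C2 C3.
move=> [U [oU UK Ux]] hk.
exists [set y | U (y - k)]; split => /=.
- move=> xs a hc ha.
  have := C1 _ _ _ _ hc (conv_const (- k)).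
  by move=> /oU /(_ ha).
- move=> y /= /UK hy.
  by have := le_add hy hk; rewrite subrK.
- by rewrite addrK.
Qed.

Lemma I_scale l x : 0 < l -> I x -> I (l *: x).
Proof.
case: Hc => C1 C2 C3.
case: Hv => refl [antis [tr [V1 [V2 V3]]]].
move=> hl [U [oU UK Ux]].
have l0 : l != 0 by rewrite gt_eqF.
exists [set y | U (l^-1 *: y)]; split => /=.
- move=> xs a hc ha.
  exact: oU _ _ (C2 _ _ l^-1 hc) ha.
- move=> y /= /UK hy.
  have := V2 _ _ _ (ltW hl) hy.
  by rewrite scaler0 scalerA mulfV // scale1r.
- by rewrite scalerA mulVf // scale1r.
Qed.

Lemma I_not0 : ~ I 0.
Proof.
case: Hv => refl [antis [tr [V1 [V2 V3]]]].
move=> [U [oU UK U0]].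
have [k [hk kn0]] : exists k, le 0 k /\ k <> 0.
  apply: contrapT => nk; apply: hne; apply/seteqP; split => x /=.
    move=> hx; apply: contrapT => nx; apply: nk; by exists x.
  by move=> ->; apply: refl.
have [N hN] := oU _ _ (conv_small 0 k) U0.
set t : R := N.+1%:R^-1.
have ht : 0 < t by rewrite /t invr_gt0.
have h1 : le 0 (- (t *: k)) by rewrite -sub0r; apply: UK; apply: hN.
have h2 : le 0 (t *: k) by have := V2 _ _ _ (ltW ht) hk; rewrite scaler0.
have e := le_antis0 h2 h1.
apply: kn0.
have : t^-1 *: (t *: k) = 0 by rewrite e scaler0.
by rewrite scalerA mulVf ?gt_eqF // scale1r.
Qed.

Lemma part2 : is_strict_vector_ordering conv le (fun x y => I (y - x)).
Proof.
case: Hc => C1 C2 C3.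
have trI x y z : le 0 (y - x) -> I (z - y) -> I (z - x).
  move=> h1 h2.
  have -> : z - x = (z - y) + (y - x) by rewrite addrA subrK.
  exact: I_add.
have irr x : ~ I (x - x) by rewrite subrr; apply: I_not0.
split; [split|].
- case: hint => a ha; exists 0, a; by rewrite subr0.
- exact: irr.
- by move=> x y h1 h2; apply: (irr x); apply: trI (I_K h1) h2.
- by move=> x y z h1 h2; apply: trI (I_K h1) h2.
split; [|split; [|split; [|split]]].
- by move=> x y /I_K /(proj2 (le_sub _ _)).
- by move=> x y z /(proj1 (le_sub _ _)); apply: trI.
- move=> x y z.
  by have -> : y + z - (x + z) = y - x by rewrite opprD addrACA subrr addr0.
- by move=> l x y hl h; rewrite -scalerBr; apply: I_scale.
- move=> xs ys a b cx cy [U [oU UK Ub]].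
  have cxn := C2 _ _ (-1) cx.
  have := C1 _ _ _ _ cy cxn.
  rewrite scaleN1r => /oU /(_ Ub) [N hN].
  exists N => n hn; exists U; split => //.
  by have := hN n hn; rewrite scaleN1r.
Qed.
End Part2.
End S.

Theorem theorem5p2 (R : realType) (Y : lmodType R)
    (conv : (nat -> Y) -> Y -> Prop) (le : Y -> Y -> Prop) :
  is_convergence conv ->
  is_vector_ordering conv le ->
  let K := [set x : Y | le 0 x] in
  (forall lt : Y -> Y -> Prop,
      is_strict_vector_ordering conv le lt ->
      is_solid_cone conv K /\ conv_interior conv K = [set x | lt 0 x]) /\
  (is_solid_cone conv K ->
      is_strict_vector_ordering conv le (fun x y => conv_interior conv K (y - x)) /\
      (forall lt : Y -> Y -> Prop,
          is_strict_vector_ordering conv le lt ->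
          forall x y, lt x y <-> conv_interior conv K (y - x))).
Proof.
move=> Hc Hv K.
split.
  by move=> lt Hs; apply: part1.
move=> [_ hne hint]; split.
  exact: part2.
move=> lt Hs x y.
have := interior_eq Hc Hv Hs => e.
rewrite /K e /=.
exact: (lt_sub Hs).
Qed.
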